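(* Let $\vec r:\mathbb{Z}\to\mathbb{R}^2$ be a nondegenerate convex hexagon with parallel and equi-length opposite sides (closed with period $6$, simple, convex, $\vec t_{k+3}=-\vec t_k$ for all $k$). Then the iterates $\mathcal{P}(\vec r)$, $\mathcal{P}(\mathcal{P}(\vec r))$, $\mathcal{Q}(\vec r)$, $\mathcal{Q}(\mathcal{Q}(\vec r))$ are well defined and are again nondegenerate convex hexagons with parallel and equi-length opposite sides, and $\vec r$ is periodically stable under both maps: there exist integers $s,s'$ such that for all $n$ the centroaffine curvatures satisfy $\kappa_n(\mathcal{P}(\mathcal{P}(\vec r)))=\kappa_{n+s}(\vec r)$, $\bar\kappa_n(\mathcal{P}(\mathcal{P}(\vec r)))=\bar\kappa_{n+s}(\vec r)$, and $\kappa_n(\mathcal{Q}(\mathcal{Q}(\vec r)))=\kappa_{n+s'}(\vec r)$, $\bar\kappa_n(\mathcal{Q}(\mathcal{Q}(\vec r)))=\bar\kappa_{n+s'}(\vec r)$.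
   Context: A discrete planar curve is a map $\vec r:\mathbb{Z}\to\mathbb{R}^2$; $\vec r_k=\vec r(k)$, $\vec t_k=\vec r_{k+1}-\vec r_k$, $[\vec a,\vec b]$ the $2\times2$ determinant. Nondegenerate: $[\vec t_{k-1},\vec t_k]\ne0$ for all $k$. First and second centroaffine curvatures: $\kappa_k=\frac{[\vec t_k,\vec t_{k+1}]}{[\vec t_{k-1},\vec t_k]}$, $\bar\kappa_k=\frac{[\vec t_{k-1},\vec t_{k+1}]}{[\vec t_{k-1},\vec t_k]}$. Closed with period $q$: $\vec r(k+q)=\vec r(k)$ for all $k$, $q$ minimal; simple: the piecewise-linear interpolation is injective on $[k,k+q)$; convex: for each line through $\vec r_k,\vec r_{k+1}$, all vertices lie in one closed half-plane bounded by it. The pentagram image is $\mathcal{P}(\vec r)_k=$ the intersection point of the line through $\vec r_{k-1},\vec r_{k+1}$ with the line through $\vec r_k,\vec r_{k+2}$; the inverse pentagram image is $\mathcal{Q}(\vec r)_k=$ the intersection point of the line through $\vec r_{k-1},\vec r_k$ with the line through $\vec r_{k+1},\vec r_{k+2}$. *)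

(* Defs.v *)
From Stdlib Require Import Reals ZArith.
Open Scope R_scope.

Definition vec := (R * R)%type.
Definition vsub (a b : vec) : vec := (fst a - fst b, snd a - snd b).
Definition vadd (a b : vec) : vec := (fst a + fst b, snd a + snd b).
Definition vscale (c : R) (a : vec) : vec := (c * fst a, c * snd a).
Definition vopp (a : vec) : vec := (- fst a, - snd a).
Definition det (a b : vec) : R := fst a * snd b - snd a * fst b.

Definition curve := Z -> vec.

Definition tang (r : curve) (k : Z) : vec := vsub (r (k + 1)%Z) (r k).

Definition nondegenerate (r : curve) : Prop :=
  forall k : Z, det (tang r (k - 1)%Z) (tang r k) <> 0.

Definition kappa (r : curve) (k : Z) : R :=
  det (tang r k) (tang r (k + 1)%Z) / det (tang r (k - 1)%Z) (tang r k).

Definition kappabar (r : curve) (k : Z) : R :=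
  det (tang r (k - 1)%Z) (tang r (k + 1)%Z) / det (tang r (k - 1)%Z) (tang r k).

Definition closed_period (r : curve) (q : Z) : Prop :=
  (0 < q)%Z /\ (forall k, r (k + q)%Z = r k) /\
  (forall p, (0 < p < q)%Z -> exists k, r (k + p)%Z <> r k).

(* piecewise-linear interpolation at parameter j + u, with j integer, 0 <= u < 1 *)
Definition pl (r : curve) (j : Z) (u : R) : vec :=
  vadd (r j) (vscale u (tang r j)).

Definition simple (r : curve) (q : Z) : Prop :=
  forall k j1 j2 : Z, forall u1 u2 : R,
    (k <= j1 < k + q)%Z -> (k <= j2 < k + q)%Z ->
    0 <= u1 < 1 -> 0 <= u2 < 1 ->
    pl r j1 u1 = pl r j2 u2 -> j1 = j2 /\ u1 = u2.

Definition convex (r : curve) : Prop :=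
  forall k : Z,
    (forall j : Z, 0 <= det (tang r k) (vsub (r j) (r k))) \/
    (forall j : Z, det (tang r k) (vsub (r j) (r k)) <= 0).

(* The line through a,b and the line through c,d meet in exactly one point
   iff det(b-a, d-c) <> 0 (this forces a <> b and c <> d). *)
Definition lines_meet (a b c d : vec) : Prop :=
  det (vsub b a) (vsub d c) <> 0.

(* the intersection point of line ab with line cd (when lines_meet a b c d) *)
Definition meet (a b c d : vec) : vec :=
  vadd a (vscale (det (vsub c a) (vsub d c) / det (vsub b a) (vsub d c)) (vsub b a)).

Definition Pwd (r : curve) : Prop :=
  forall k : Z, lines_meet (r (k - 1)%Z) (r (k + 1)%Z) (r k) (r (k + 2)%Z).
Definition Pmap (r : curve) : curve :=
  fun k => meet (r (k - 1)%Z) (r (k + 1)%Z) (r k) (r (k + 2)%Z).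

Definition Qwd (r : curve) : Prop :=
  forall k : Z, lines_meet (r (k - 1)%Z) (r k) (r (k + 1)%Z) (r (k + 2)%Z).
Definition Qmap (r : curve) : curve :=
  fun k => meet (r (k - 1)%Z) (r k) (r (k + 1)%Z) (r (k + 2)%Z).

Definition par_hexagon (r : curve) : Prop :=
  nondegenerate r /\ closed_period r 6 /\ simple r 6 /\ convex r /\
  (forall k : Z, tang r (k + 3)%Z = vopp (tang r k)).

(* Main.v *)
Require Import Defs.
From Stdlib Require Import Reals ZArith Lra Lia Psatz FunctionalExtensionality.
Open Scope R_scope.

Definition hx (X A B C : vec) : curve := fun k =>
  match (k mod 6)%Z with
  | 0%Z => X | 1%Z => vadd X A | 2%Z => vadd (vadd X A) B
  | 3%Z => vadd (vadd (vadd X A) B) C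
  | 4%Z => vadd (vadd X B) C | _ => vadd X C end.

Lemma hxn X A B C e q n : e = (6*q + n)%Z -> (0 <= n < 6)%Z ->
  hx X A B C e = hx X A B C n.
Proof. intros -> Hn. unfold hx. rewrite (Z.add_comm (6*q)), Z.mul_comm, Z_mod_plus_full.
  rewrite (Z.mod_small n 6 Hn). destruct (n mod 6)%Z; reflexivity. Qed.
Lemma hx0 X A B C e q : e = (6*q)%Z -> hx X A B C e = X.
Proof. intros. rewrite (hxn X A B C e q 0) by lia. reflexivity. Qed.
Lemma hx1 X A B C e q : e = (6*q+1)%Z -> hx X A B C e = vadd X A.
Proof. intros. rewrite (hxn X A B C e q 1) by lia. reflexivity. Qed.
Lemma hx2 X A B C e q : e = (6*q+2)%Z -> hx X A B C e = vadd (vadd X A) B.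
Proof. intros. rewrite (hxn X A B C e q 2) by lia. reflexivity. Qed.
Lemma hx3 X A B C e q : e = (6*q+3)%Z -> hx X A B C e = vadd (vadd (vadd X A) B) C.
Proof. intros. rewrite (hxn X A B C e q 3) by lia. reflexivity. Qed.
Lemma hx4 X A B C e q : e = (6*q+4)%Z -> hx X A B C e = vadd (vadd X B) C.
Proof. intros. rewrite (hxn X A B C e q 4) by lia. reflexivity. Qed.
Lemma hx5 X A B C e q : e = (6*q+5)%Z -> hx X A B C e = vadd X C.
Proof. intros. rewrite (hxn X A B C e q 5) by lia. reflexivity. Qed.

Ltac hxr1 q := first [ rewrite (hx0 _ _ _ _ _ q) by lia | rewrite (hx1 _ _ _ _ _ q) by lia
         | rewrite (hx2 _ _ _ _ _ q) by lia | rewrite (hx3 _ _ _ _ _ q) by lia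
         | rewrite (hx4 _ _ _ _ _ q) by lia | rewrite (hx5 _ _ _ _ _ q) by lia ].
Ltac hxr q := repeat match goal with
 | |- context [hx ?X ?A ?B ?C ?e] =>
   first [ hxr1 q | hxr1 (q-1)%Z | hxr1 (q+1)%Z | hxr1 (q-2)%Z | hxr1 (q+2)%Z]
 end.

Lemma decomp (k : Z) : exists q m, k = (6*q+m)%Z /\ (m = 0 \/ m = 1 \/ m = 2 \/ m = 3 \/ m = 4 \/ m = 5)%Z.
Proof. exists (k/6)%Z, (k mod 6)%Z. split. apply Z.div_mod; lia.
  pose proof (Z.mod_pos_bound k 6). lia. Qed.


Ltac hxr2 q1 q2 := repeat match goal with
 | |- context [hx ?X ?A ?B ?C ?e] =>
   first [ hxr1 q1 | hxr1 (q1-1)%Z | hxr1 (q1+1)%Z | hxr1 (q1-2)%Z | hxr1 (q1+2)%Z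
         | hxr1 q2 | hxr1 (q2-1)%Z | hxr1 (q2+1)%Z | hxr1 (q2-2)%Z | hxr1 (q2+2)%Z]
 end.

Definition dd (r : curve) k := det (tang r (k-1)) (tang r k).
Definition TS (r : curve) := forall k, tang r (k+3)%Z = vopp (tang r k).
Definition SG (r : curve) := forall k, 0 < dd r k * dd r (k+1).

Lemma veq (a b : vec) : fst a = fst b -> snd a = snd b -> a = b.
Proof. destruct a, b; simpl; intros; subst; reflexivity. Qed.

Definition Hs (a1 a2 b1 b2 c1 c2:R) :=
  0 < (a1*c2-a2*c1)*(a1*b2-a2*b1) /\ 0 < (a1*b2-a2*b1)*(b1*c2-b2*c1) /\ 0 < (b1*c2-b2*c1)*(a1*c2-a2*c1).

Lemma sgn3 x y z : 0 < z*x -> 0 < x*y -> 0 < y*z ->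
  (0 < x /\ 0 < y /\ 0 < z) \/ (x < 0 /\ y < 0 /\ z < 0).
Proof. intros H1 H2 H3. destruct (Rlt_le_dec 0 x).
  - left. assert (0 < y) by nra. assert (0 < z) by nra. auto.
  - right. assert (x < 0). { destruct (Req_dec x 0). subst. nra. lra. }
    assert (y < 0) by nra. assert (z < 0) by nra. auto.
Qed.

Lemma Hs_sign a1 a2 b1 b2 c1 c2 : Hs a1 a2 b1 b2 c1 c2 ->
  (0 < a1*b2-a2*b1 /\ 0 < b1*c2-b2*c1 /\ 0 < a1*c2-a2*c1) \/
  (a1*b2-a2*b1 < 0 /\ b1*c2-b2*c1 < 0 /\ a1*c2-a2*c1 < 0).
Proof. intros (H1&H2&H3). exact (sgn3 _ _ _ H1 H2 H3). Qed.

Lemma hx_TS x1 x2 a1 a2 b1 b2 c1 c2 : TS (hx (x1,x2) (a1,a2) (b1,b2) (c1,c2)).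
Proof. intro k. destruct (decomp k) as (q & m & -> & Hm). unfold tang.
  destruct Hm as [ -> | [ -> | [ -> | [ -> | [ -> | -> ]]]]]; hxr q;
  apply veq; cbn; ring. Qed.

Ltac cases6 Hm := destruct Hm as [ -> | [ -> | [ -> | [ -> | [ -> | -> ]]]]].

Lemma hx_nd x1 x2 a1 a2 b1 b2 c1 c2 : Hs a1 a2 b1 b2 c1 c2 ->
  nondegenerate (hx (x1,x2) (a1,a2) (b1,b2) (c1,c2)).
Proof. intros H k. pose proof (Hs_sign _ _ _ _ _ _ H) as Hsg.
  destruct (decomp k) as (q & m & -> & Hm). unfold tang.
  cases6 Hm; hxr q; unfold det, vsub, vadd; cbn; intro E;
  destruct Hsg as [(?&?&?)|(?&?&?)]; lra. Qed.

Lemma hx_cp x1 x2 a1 a2 b1 b2 c1 c2 : Hs a1 a2 b1 b2 c1 c2 ->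
  closed_period (hx (x1,x2) (a1,a2) (b1,b2) (c1,c2)) 6.
Proof. intros H. pose proof (Hs_sign _ _ _ _ _ _ H) as Hsg.
  split; [lia|split].
  - intro k. destruct (decomp k) as (q & m & -> & Hm). cases6 Hm; hxr q; reflexivity.
  - intros p Hp. exists 0%Z. assert (p=1\/p=2\/p=3\/p=4\/p=5)%Z as Hp' by lia.
    destruct Hp' as [ -> | [ -> | [ -> | [ -> | -> ]]]]; hxr 0%Z; unfold vadd; cbn;
    intro E; injection E; intros E1 E2.
    + assert (a1 = 0) by lra. assert (a2 = 0) by lra. subst. destruct Hsg as [(?&?&?)|(?&?&?)]; lra.
    + assert (b1 = -a1) by lra. assert (b2 = -a2) by lra. subst. destruct Hsg as [(?&?&?)|(?&?&?)]; lra.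
    + assert (c1 = -a1-b1) by lra. assert (c2 = -a2-b2) by lra. subst. destruct Hsg as [(?&?&?)|(?&?&?)]; lra.
    + assert (c1 = -b1) by lra. assert (c2 = -b2) by lra. subst. destruct Hsg as [(?&?&?)|(?&?&?)]; lra.
    + assert (c1 = 0) by lra. assert (c2 = 0) by lra. subst. destruct Hsg as [(?&?&?)|(?&?&?)]; lra.
Qed.

Lemma hx_cv x1 x2 a1 a2 b1 b2 c1 c2 : Hs a1 a2 b1 b2 c1 c2 ->
  convex (hx (x1,x2) (a1,a2) (b1,b2) (c1,c2)).
Proof. intros H k. pose proof (Hs_sign _ _ _ _ _ _ H) as Hsg.
  destruct (decomp k) as (q1 & m1 & -> & Hm1). unfold tang.
  destruct Hsg as [(?&?&?)|(?&?&?)]; [left|right]; intro j;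
  destruct (decomp j) as (q2 & m2 & -> & Hm2);
  cases6 Hm1; cases6 Hm2; hxr2 q1 q2; unfold det, vsub, vadd; cbn; lra.
Qed.

Lemma pl_det (r : curve) j1 u1 j2 u2 : pl r j1 u1 = pl r j2 u2 ->
  (1-u1) * det (tang r j2) (vsub (r j1) (r j2)) +
  u1 * det (tang r j2) (vsub (r (j1+1)%Z) (r j2)) = 0.
Proof. unfold pl, tang, vadd, vsub, vscale, det.
  destruct (r j1) as [p1 p2], (r (j1+1)%Z) as [p1' p2'], (r j2) as [q1 q2], (r (j2+1)%Z) as [q1' q2'].
  cbn. intro E. injection E. intros E2 E1.
  transitivity ((q1'-q1)*((p2 + u1*(p2'-p2)) - q2) - (q2'-q2)*((p1+u1*(p1'-p1)) - q1)).
  ring. rewrite E1, E2. ring. Qed.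

Lemma pl_same r j u1 u2 : det (tang r (j-1)) (tang r j) <> 0 -> pl r j u1 = pl r j u2 -> u1 = u2.
Proof. intros Hd E. unfold pl, vadd, vscale in E.
  destruct (tang r j) as [t1 t2]; destruct (tang r (j-1)) as [s1 s2]; destruct (r j) as [p1 p2].
  cbn in *. injection E; intros E2 E1. destruct (Req_dec u1 u2) as [|Hne]; auto. exfalso.
  apply Hd. unfold det; cbn.
  assert (t1 = 0). { apply (Rmult_eq_reg_l (u1-u2)); [lra|lra]. }
  assert (t2 = 0). { apply (Rmult_eq_reg_l (u1-u2)); [lra|lra]. }
  subst; ring. Qed.

Lemma hx_simple x1 x2 a1 a2 b1 b2 c1 c2 : Hs a1 a2 b1 b2 c1 c2 ->
  simple (hx (x1,x2) (a1,a2) (b1,b2) (c1,c2)) 6.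
Proof. intros H k j1 j2 u1 u2 Hj1 Hj2 Hu1 Hu2 E0.
  pose proof (Hs_sign _ _ _ _ _ _ H) as Hsg.
  pose proof (hx_nd x1 x2 _ _ _ _ _ _ H) as Hnd.
  pose proof (pl_det _ _ _ _ _ E0) as D1.
  pose proof (pl_det _ _ _ _ _ (eq_sym E0)) as D2.
  revert D1 D2. unfold tang.
  destruct (decomp j1) as (q1 & m1 & -> & Hm1).
  destruct (decomp j2) as (q2 & m2 & -> & Hm2).
  cases6 Hm1; cases6 Hm2; hxr2 q1 q2; unfold det, vsub, vadd, vscale; cbn [fst snd];
  intros D1 D2;
  first [ (exfalso; destruct Hsg as [(?&?&?)|(?&?&?)]; nra)
        | (assert (q1 = q2) by lia; subst q2; split; [reflexivity|];
           exact (pl_same _ _ _ _ (Hnd _) E0)) ].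
Qed.

Lemma hx_par x1 x2 a1 a2 b1 b2 c1 c2 : Hs a1 a2 b1 b2 c1 c2 ->
  par_hexagon (hx (x1,x2) (a1,a2) (b1,b2) (c1,c2)).
Proof. intros H. split; [apply hx_nd; auto|]. split; [apply hx_cp; auto|].
  split; [apply hx_simple; auto|]. split; [apply hx_cv; auto|]. apply hx_TS. Qed.

Lemma per6 (f : Z -> vec) : (forall k, f (k+6)%Z = f k) -> forall q m, f (6*q+m)%Z = f m.
Proof. intros H q m. induction q using Z.peano_ind.
  - replace (6*0+m)%Z with m by ring; reflexivity.
  - rewrite <- IHq. replace (6*Z.succ q + m)%Z with (6*q+m+6)%Z by ring. apply H.
  - rewrite <- IHq. replace (6*q + m)%Z with ((6*Z.pred q + m) + 6)%Z by lia. symmetry. apply H.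
Qed.

Lemma TS' r (H : TS r) k : vsub (r (k+4)%Z) (r (k+3)%Z) = vopp (vsub (r (k+1)%Z) (r k)).
Proof. pose proof (H k) as e. unfold tang in e. replace (k+3+1)%Z with (k+4)%Z in e by ring. exact e. Qed.

Lemma TS_r6 r : TS r -> forall k, r (k+6)%Z = r k.
Proof. intros H k.
  pose proof (TS' r H k) as e0. pose proof (TS' r H (k+1)) as e1. pose proof (TS' r H (k+2)) as e2.
  replace (k+1+4)%Z with (k+5)%Z in e1 by ring. replace (k+1+3)%Z with (k+4)%Z in e1 by ring.
  replace (k+1+1)%Z with (k+2)%Z in e1 by ring.
  replace (k+2+4)%Z with (k+6)%Z in e2 by ring. replace (k+2+3)%Z with (k+5)%Z in e2 by ring.
  replace (k+2+1)%Z with (k+3)%Z in e2 by ring.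
  unfold vsub, vopp in *.
  apply veq; [apply (f_equal fst) in e0; apply (f_equal fst) in e1; apply (f_equal fst) in e2
            | apply (f_equal snd) in e0; apply (f_equal snd) in e1; apply (f_equal snd) in e2];
  cbn in *; lra.
Qed.

Lemma TS_hx r : TS r -> r = hx (r 0%Z) (tang r 0%Z) (tang r 1%Z) (tang r 2%Z).
Proof. intros H. apply functional_extensionality. intro k.
  destruct (decomp k) as (q & m & -> & Hm).
  rewrite (per6 r (TS_r6 r H)).
  pose proof (TS' r H 0) as e0. pose proof (TS' r H 1) as e1. cbn in e0, e1.
  unfold tang. cbn [Z.add].
  cases6 Hm; hxr q; unfold vadd, vsub, vopp in *; apply veq;
  [ .. ];
  first [ reflexivity |
    (apply (f_equal fst) in e0; apply (f_equal fst) in e1; cbn in *; lra) |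
    (apply (f_equal snd) in e0; apply (f_equal snd) in e1; cbn in *; lra) ].
Qed.

Lemma gen r : TS r -> SG r -> exists x1 x2 a1 a2 b1 b2 c1 c2,
  r = hx (x1,x2) (a1,a2) (b1,b2) (c1,c2) /\ Hs a1 a2 b1 b2 c1 c2.
Proof. intros HT HG. pose proof (TS_hx r HT) as Hr.
  destruct (r 0%Z) as [x1 x2]; destruct (tang r 0%Z) as [a1 a2];
  destruct (tang r 1%Z) as [b1 b2]; destruct (tang r 2%Z) as [c1 c2].
  exists x1, x2, a1, a2, b1, b2, c1, c2. split; [exact Hr|].
  rewrite Hr in HG. pose proof (HG 0%Z) as G0. pose proof (HG 1%Z) as G1. pose proof (HG 2%Z) as G2.
  revert G0 G1 G2. unfold dd, tang. hxr 0%Z. unfold det, vsub, vadd; cbn [fst snd].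
  intros G0 G1 G2. split; [|split]; lra.
Qed.

Ltac nzs := intro E; first [ (apply Rlt_irrefl with 0; lra) | idtac ].

Lemma hx_Pwd x1 x2 a1 a2 b1 b2 c1 c2 : Hs a1 a2 b1 b2 c1 c2 ->
  Pwd (hx (x1,x2) (a1,a2) (b1,b2) (c1,c2)).
Proof. intros H k. pose proof (Hs_sign _ _ _ _ _ _ H) as Hsg.
  destruct (decomp k) as (q & m & -> & Hm). unfold lines_meet.
  cases6 Hm; hxr q; unfold det, vsub, vadd; cbn [fst snd]; intro E;
  destruct Hsg as [(?&?&?)|(?&?&?)]; lra. Qed.

Lemma hx_Qwd x1 x2 a1 a2 b1 b2 c1 c2 : Hs a1 a2 b1 b2 c1 c2 ->
  Qwd (hx (x1,x2) (a1,a2) (b1,b2) (c1,c2)).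
Proof. intros H k. pose proof (Hs_sign _ _ _ _ _ _ H) as Hsg.
  destruct (decomp k) as (q & m & -> & Hm). unfold lines_meet.
  cases6 Hm; hxr q; unfold det, vsub, vadd; cbn [fst snd]; intro E;
  destruct Hsg as [(?&?&?)|(?&?&?)]; lra. Qed.

Lemma hx_PTS x1 x2 a1 a2 b1 b2 c1 c2 : Hs a1 a2 b1 b2 c1 c2 ->
  TS (Pmap (hx (x1,x2) (a1,a2) (b1,b2) (c1,c2))).
Proof. intros H k. pose proof (Hs_sign _ _ _ _ _ _ H) as Hsg.
  destruct (decomp k) as (q & m & -> & Hm). unfold tang, Pmap, meet.
  cases6 Hm; hxr q; unfold det, vsub, vadd, vscale, vopp; cbn [fst snd];
  apply veq; cbn [fst snd]; field;
  intro E; destruct Hsg as [(?&?&?)|(?&?&?)]; lra. Qed.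

Lemma hx_QTS x1 x2 a1 a2 b1 b2 c1 c2 : Hs a1 a2 b1 b2 c1 c2 ->
  TS (Qmap (hx (x1,x2) (a1,a2) (b1,b2) (c1,c2))).
Proof. intros H k. pose proof (Hs_sign _ _ _ _ _ _ H) as Hsg.
  destruct (decomp k) as (q & m & -> & Hm). unfold tang, Qmap, meet.
  cases6 Hm; hxr q; unfold det, vsub, vadd, vscale, vopp; cbn [fst snd];
  apply veq; cbn [fst snd]; field;
  repeat split; intro E; destruct Hsg as [(?&?&?)|(?&?&?)]; lra. Qed.

Lemma hx_Pdd x1 x2 a1 a2 b1 b2 c1 c2 : Hs a1 a2 b1 b2 c1 c2 ->
  let r := hx (x1,x2) (a1,a2) (b1,b2) (c1,c2) in
  forall k, dd (Pmap r) k = dd r k * dd r (k+1) / (dd r (k-1) + dd r k + dd r (k+1)).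
Proof.
  intros H r k. pose proof (Hs_sign _ _ _ _ _ _ H) as Hsg.
  destruct (decomp k) as (q & m & -> & Hm).
  unfold dd, tang, Pmap, meet, r.
  cases6 Hm; hxr q;
  unfold vadd, vsub, vscale, det; cbn [fst snd];
  field; repeat split; intro E; destruct Hsg as [(?&?&?)|(?&?&?)]; lra.
Qed.

Lemma hx_Qdd x1 x2 a1 a2 b1 b2 c1 c2 : Hs a1 a2 b1 b2 c1 c2 ->
  let r := hx (x1,x2) (a1,a2) (b1,b2) (c1,c2) in
  forall k, dd (Qmap r) k = (dd r (k-1) * dd r k + dd r k * dd r (k+1) + dd r (k+1) * dd r (k-1)) / dd r (k-1).
Proof.
  intros H r k. pose proof (Hs_sign _ _ _ _ _ _ H) as Hsg.
  destruct (decomp k) as (q & m & -> & Hm).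
  unfold dd, tang, Qmap, meet, r.
  cases6 Hm; hxr q;
  unfold vadd, vsub, vscale, det; cbn [fst snd];
  field; repeat split; intro E; destruct Hsg as [(?&?&?)|(?&?&?)]; lra.
Qed.

Lemma z1 n : (n+1-1 = n)%Z. Proof. ring. Qed.
Lemma z2 n : (n-1+1 = n)%Z. Proof. ring. Qed.
Lemma z3 n : (n+1+1 = n+2)%Z. Proof. ring. Qed.
Lemma z4 n : (n-1-1 = n-2)%Z. Proof. ring. Qed.
Lemma z5 n : (n+2-1 = n+1)%Z. Proof. ring. Qed.
Lemma z6 n : (n-2+1 = n-1)%Z. Proof. ring. Qed.
Lemma z7 n : (n+2+1 = n+3)%Z. Proof. ring. Qed.
Lemma z8 n : (n-2-1 = n-3)%Z. Proof. ring. Qed.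
Ltac zfix := repeat (rewrite ?z1, ?z2, ?z3, ?z4, ?z5, ?z6, ?z7, ?z8).

Lemma dd3 r : TS r -> forall k, dd r (k+3) = dd r k.
Proof. intros H k. unfold dd. replace (k+3-1)%Z with ((k-1)+3)%Z by ring.
  rewrite !H. unfold det, vopp; cbn; ring. Qed.

Lemma dd3a r : TS r -> forall k, dd r (k+2) = dd r (k-1).
Proof. intros H k. rewrite <- (dd3 r H (k-1)). f_equal; ring. Qed.
Lemma dd3b r : TS r -> forall k, dd r (k-2) = dd r (k+1).
Proof. intros H k. rewrite <- (dd3 r H (k-2)). f_equal; ring. Qed.
Lemma dd3c r : TS r -> forall k, dd r (k-3) = dd r k.
Proof. intros H k. rewrite <- (dd3 r H (k-3)). f_equal; ring. Qed.

Lemma kappa_dd r k : kappa r k = dd r (k+1) / dd r k.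
Proof. unfold kappa, dd. rewrite z1. reflexivity. Qed.

Lemma kb_dd r : TS r -> forall k, kappabar r k = dd r (k-1) / dd r k.
Proof. intros H k. unfold kappabar, dd. f_equal. rewrite z4.
  replace (k+1)%Z with ((k-2)+3)%Z by ring. rewrite H. unfold det, vopp; cbn; ring. Qed.

Lemma par_TS_SG r : par_hexagon r -> TS r /\ SG r.
Proof. intros (Hnd & _ & _ & Hcv & HT). split; [exact HT|]. intro k.
  assert (V1 : det (tang r k) (vsub (r (k+2)%Z) (r k)) = dd r (k+1)).
  { unfold dd, tang. rewrite z1, z3. unfold det, vsub; cbn; ring. }
  assert (V2 : det (tang r k) (vsub (r (k-1)%Z) (r k)) = dd r k).
  { unfold dd, tang. rewrite z2. unfold det, vsub; cbn; ring. }
  assert (N1 : dd r k <> 0) by apply Hnd. assert (N2 : dd r (k+1) <> 0) by apply Hnd.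
  destruct (Hcv k) as [C|C]; pose proof (C (k+2)%Z) as C1; pose proof (C (k-1)%Z) as C2;
  rewrite V1 in C1; rewrite V2 in C2.
  - assert (0 < dd r k) by (destruct (Req_dec (dd r k) 0); [contradiction|lra]).
    assert (0 < dd r (k+1)) by (destruct (Req_dec (dd r (k+1)) 0); [contradiction|lra]). nra.
  - assert (dd r k < 0) by (destruct (Req_dec (dd r k) 0); [contradiction|lra]).
    assert (dd r (k+1) < 0) by (destruct (Req_dec (dd r (k+1)) 0); [contradiction|lra]). nra.
Qed.

Lemma stepP r : TS r -> SG r -> Pwd r /\ TS (Pmap r) /\
  forall k, dd (Pmap r) k = dd r k * dd r (k+1) / (dd r (k-1) + dd r k + dd r (k+1)).
Proof. intros HT HG. destruct (gen r HT HG) as (x1&x2&a1&a2&b1&b2&c1&c2&->&H).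
  split; [apply hx_Pwd; auto|split; [apply hx_PTS; auto|apply hx_Pdd; auto]]. Qed.

Lemma stepQ r : TS r -> SG r -> Qwd r /\ TS (Qmap r) /\
  forall k, dd (Qmap r) k = (dd r (k-1) * dd r k + dd r k * dd r (k+1) + dd r (k+1) * dd r (k-1)) / dd r (k-1).
Proof. intros HT HG. destruct (gen r HT HG) as (x1&x2&a1&a2&b1&b2&c1&c2&->&H).
  split; [apply hx_Qwd; auto|split; [apply hx_QTS; auto|apply hx_Qdd; auto]]. Qed.

Lemma TSSG_par r : TS r -> SG r -> par_hexagon r.
Proof. intros HT HG. destruct (gen r HT HG) as (x1&x2&a1&a2&b1&b2&c1&c2&->&H).
  apply hx_par; auto. Qed.

Lemma same3 x y z : 0 < x*y -> 0 < y*z -> (0<x/\0<y/\0<z) \/ (x<0/\y<0/\z<0).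
Proof. intros H1 H2. assert (0 < z*x).
  { assert (0 < (x*y)*(y*z)) by nra.
    destruct (Rlt_le_dec 0 y). nra. assert (y <> 0) by (intro; subst; nra). nra. }
  destruct (sgn3 x y z) as [(?&?&?)|(?&?&?)]; auto. Qed.

Ltac sgcase x y z H1 H2 := destruct (same3 x y z H1 H2) as [(?&?&?)|(?&?&?)].

Lemma absP x y z : 0 < x*y -> 0 < y*z -> 0 < y*z/(x+y+z) * (z*x/(y+z+x)).
Proof. intros H1 H2. replace (y+z+x) with (x+y+z) by ring. unfold Rdiv.
  assert (0 < z*x) by (sgcase x y z H1 H2; nra).
  assert (x+y+z <> 0) by (sgcase x y z H1 H2; lra).
  assert (0 < /(x+y+z) * /(x+y+z)).
  { assert (/(x+y+z) <> 0) by (apply Rinv_neq_0_compat; auto).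
    pose proof (Rsqr_pos_lt _ H3). unfold Rsqr in *. auto. }
  replace (y * z * / (x + y + z) * (z * x * / (x + y + z))) with ((y*z)*(z*x)*(/(x+y+z) * /(x+y+z))) by ring.
  assert (0 < (y*z)*(z*x)) by nra. nra. Qed.

Lemma absQ x y z : 0 < x*y -> 0 < y*z -> 0 < (x*y+y*z+z*x)/x * ((y*z+z*x+x*y)/y).
Proof. intros H1 H2. replace (y*z+z*x+x*y) with (x*y+y*z+z*x) by ring.
  assert (0 < z*x) by (sgcase x y z H1 H2; nra).
  assert (Hs : 0 < x*y+y*z+z*x) by lra. unfold Rdiv.
  sgcase x y z H1 H2.
  - assert (0 < /x) by (apply Rinv_0_lt_compat; auto).
    assert (0 < /y) by (apply Rinv_0_lt_compat; auto).
    apply Rmult_lt_0_compat; apply Rmult_lt_0_compat; auto.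
  - assert (/x < 0) by (apply Rinv_lt_0_compat; auto).
    assert (/y < 0) by (apply Rinv_lt_0_compat; auto).
    assert ((x*y+y*z+z*x) * /x < 0) by nra.
    assert ((x*y+y*z+z*x) * /y < 0) by nra. nra. Qed.

Lemma SG_P r : TS r -> SG r -> SG (Pmap r).
Proof. intros HT HG k. destruct (stepP r HT HG) as (_&_&F).
  rewrite (F k), (F (k+1)%Z). zfix. rewrite (dd3a r HT k).
  pose proof (HG (k-1)%Z) as G1. rewrite z2 in G1. apply absP; auto. Qed.

Lemma SG_Q r : TS r -> SG r -> SG (Qmap r).
Proof. intros HT HG k. destruct (stepQ r HT HG) as (_&_&F).
  rewrite (F k), (F (k+1)%Z). zfix. rewrite (dd3a r HT k).
  pose proof (HG (k-1)%Z) as G1. rewrite z2 in G1. apply absQ; auto. Qed.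

Lemma ratio1 p q w : 0 < p*q -> 0 < q*w -> (w*p/(q+w+p))/(q*w/(p+q+w)) = p/q.
Proof. intros H1 H2. sgcase p q w H1 H2; field; repeat split; lra. Qed.
Lemma ratio2 p q w : 0 < p*q -> 0 < q*w -> (p*q/(w+p+q))/(q*w/(p+q+w)) = p/w.
Proof. intros H1 H2. sgcase p q w H1 H2; field; repeat split; lra. Qed.
Lemma ratio3 u v w : 0 < u*v -> 0 < v*w -> ((v*w+w*u+u*v)/v)/((u*v+v*w+w*u)/u) = u/v.
Proof. intros H1 H2. assert (0 < w*u) by (sgcase u v w H1 H2; nra).
  sgcase u v w H1 H2; field; repeat split; lra. Qed.
Lemma ratio4 u v w : 0 < u*v -> 0 < v*w -> ((w*u+u*v+v*w)/w)/((u*v+v*w+w*u)/u) = u/w.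
Proof. intros H1 H2. assert (0 < w*u) by (sgcase u v w H1 H2; nra).
  sgcase u v w H1 H2; field; repeat split; lra. Qed.
Lemma fin1 a b c : 0 < a*b -> 0 < b*c -> (a*b/(c+a+b))/(b*c/(a+b+c)) = a/c.
Proof. intros H1 H2. sgcase a b c H1 H2; field; repeat split; lra. Qed.
Lemma fin2 a b c : 0 < a*b -> 0 < b*c -> (a*b/(c+a+b))/(c*a/(b+c+a)) = b/c.
Proof. intros H1 H2. sgcase a b c H1 H2; field; repeat split; lra. Qed.
Lemma fin3 a b c : 0 < a*b -> 0 < b*c -> ((c*a+a*b+b*c)/c)/((a*b+b*c+c*a)/a) = a/c.
Proof. intros H1 H2. assert (0 < c*a) by (sgcase a b c H1 H2; nra).
  sgcase a b c H1 H2; field; repeat split; lra. Qed.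
Lemma fin4 a b c : 0 < a*b -> 0 < b*c -> ((c*a+a*b+b*c)/c)/((b*c+c*a+a*b)/b) = b/c.
Proof. intros H1 H2. assert (0 < c*a) by (sgcase a b c H1 H2; nra).
  sgcase a b c H1 H2; field; repeat split; lra. Qed.

Lemma kPP r : TS r -> SG r -> forall n, kappa (Pmap (Pmap r)) n = kappa r (n+1) /\
   kappabar (Pmap (Pmap r)) n = kappabar r (n+1).
Proof. intros HT HG n.
  destruct (stepP r HT HG) as (_&PT&PF). pose proof (SG_P r HT HG) as PG.
  destruct (stepP _ PT PG) as (_&PT2&PF2).
  pose proof (PG (n-1)%Z) as G1. rewrite z2 in G1. pose proof (PG n) as G2.
  pose proof (HG (n-1)%Z) as H1. rewrite z2 in H1. pose proof (HG n) as H2.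
  split.
  - rewrite !kappa_dd. rewrite (PF2 (n+1)%Z), (PF2 n). zfix. rewrite (dd3a _ PT n).
    rewrite ratio1 by auto.
    rewrite (PF (n-1)%Z), (PF n). zfix. rewrite (dd3b r HT n), (dd3a r HT n).
    apply fin1; auto.
  - rewrite !(kb_dd _ PT2), (kb_dd _ HT). rewrite (PF2 (n-1)%Z), (PF2 n). zfix.
    rewrite (dd3b _ PT n). rewrite ratio2 by auto.
    rewrite (PF (n-1)%Z), (PF (n+1)%Z). zfix. rewrite (dd3b r HT n), (dd3a r HT n).
    apply fin2; auto.
Qed.

Lemma kQQ r : TS r -> SG r -> forall n, kappa (Qmap (Qmap r)) n = kappa r (n+1) /\
   kappabar (Qmap (Qmap r)) n = kappabar r (n+1).
Proof. intros HT HG n.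
  destruct (stepQ r HT HG) as (_&PT&PF). pose proof (SG_Q r HT HG) as PG.
  destruct (stepQ _ PT PG) as (_&PT2&PF2).
  pose proof (PG (n-1)%Z) as G1. rewrite z2 in G1. pose proof (PG n) as G2.
  pose proof (HG (n-1)%Z) as H1. rewrite z2 in H1. pose proof (HG n) as H2.
  split.
  - rewrite !kappa_dd. rewrite (PF2 (n+1)%Z), (PF2 n). zfix. rewrite (dd3a _ PT n).
    rewrite ratio3 by auto.
    rewrite (PF (n-1)%Z), (PF n). zfix. rewrite (dd3b r HT n), (dd3a r HT n).
    apply fin3; auto.
  - rewrite !(kb_dd _ PT2), (kb_dd _ HT). rewrite (PF2 (n-1)%Z), (PF2 n). zfix.
    rewrite (dd3b _ PT n). rewrite ratio4 by auto.
    rewrite (PF (n-1)%Z), (PF (n+1)%Z). zfix. rewrite (dd3b r HT n), (dd3a r HT n).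
    apply fin4; auto.
Qed.

Theorem proposition7p12 (r : curve) :
  par_hexagon r ->
  (Pwd r /\ par_hexagon (Pmap r) /\ Pwd (Pmap r) /\ par_hexagon (Pmap (Pmap r))) /\
  (Qwd r /\ par_hexagon (Qmap r) /\ Qwd (Qmap r) /\ par_hexagon (Qmap (Qmap r))) /\
  (exists s s' : Z, forall n : Z,
     kappa (Pmap (Pmap r)) n = kappa r (n + s)%Z /\
     kappabar (Pmap (Pmap r)) n = kappabar r (n + s)%Z /\
     kappa (Qmap (Qmap r)) n = kappa r (n + s')%Z /\
     kappabar (Qmap (Qmap r)) n = kappabar r (n + s')%Z).
Proof.
  intros Hp. destruct (par_TS_SG r Hp) as [HT HG].
  destruct (stepP r HT HG) as (Pw&PT&_). pose proof (SG_P r HT HG) as PG.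
  destruct (stepP _ PT PG) as (Pw2&PT2&_). pose proof (SG_P _ PT PG) as PG2.
  destruct (stepQ r HT HG) as (Qw&QT&_). pose proof (SG_Q r HT HG) as QG.
  destruct (stepQ _ QT QG) as (Qw2&QT2&_). pose proof (SG_Q _ QT QG) as QG2.
  split; [|split].
  - split; [auto|split; [apply TSSG_par; auto|split; [auto|apply TSSG_par; auto]]].
  - split; [auto|split; [apply TSSG_par; auto|split; [auto|apply TSSG_par; auto]]].
  - exists 1%Z, 1%Z. intro n.
    destruct (kPP r HT HG n) as [A B]. destruct (kQQ r HT HG n) as [C D]. auto.
Qed.
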